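(* Let $X$ be a Tychonoff space and $\beta X$ its Čech–Stone compactification. (a) If $|\beta X\setminus X|=1$, then $\mathsf{EC}(X,\mathbb{R})$ holds. (b) If $\beta X\setminus X$ is at most countable and $X$ is locally compact, then $\mathsf{L}(X,\mathbb{R})$ holds.
   Context: All spaces are Hausdorff and maps continuous. For a non-Lindelöf space $X$ and a space $Y$: $\mathsf{EC}(X,Y)$ means that for every continuous $f:X\to Y$ there is a Lindelöf $Z\subset X$ with $f(X\setminus Z)$ a singleton; $\mathsf{L}(X,Y)$ means that for every continuous $f:X\to Y$ there is a Lindelöf $Z\subset X$ with $f(Z)=f(X)$. (For Lindelöf $X$ these properties are regarded as trivially true.) *)

(* Defs.v *)
From HB Require Import structures.
From mathcomp Require Import all_boot all_order all_algebra.
From mathcomp Require Import all_classical all_reals all_analysis.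
From mathcomp Require Import Rstruct Rstruct_topology.
Set Implicit Arguments. Unset Strict Implicit. Unset Printing Implicit Defensive.
Import Order.TTheory GRing.Theory Num.Theory.
Local Open Scope classical_set_scope.

Definition completely_regular (X : topologicalType) : Prop :=
  forall (C : set X) (x : X), closed C -> ~ C x ->
    exists f : X -> Rdefinitions.R, continuous f /\ f x = 0%R /\
      (forall y, C y -> f y = 1%R).

Definition tychonoff_space (X : topologicalType) : Prop :=
  completely_regular X /\ hausdorff_space X.

Definition lindelof (X : topologicalType) (A : set X) : Prop :=
  forall (I : Type) (U : I -> set X), (forall i, open (U i)) ->
    A `<=` \bigcup_(i in [set: I]) U i ->
    exists J : set I, countable J /\ A `<=` \bigcup_(i in J) U i.

(* EC(X,Y) (trivially true for Lindelöf X). *)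
Definition EC (X Y : topologicalType) : Prop :=
  ~ lindelof [set: X] ->
  forall f : X -> Y, continuous f ->
    exists Z : set X, lindelof Z /\ exists y : Y, f @` (~` Z) = [set y].

(* L(X,Y) (trivially true for Lindelöf X). *)
Definition Lprop (X Y : topologicalType) : Prop :=
  ~ lindelof [set: X] ->
  forall f : X -> Y, continuous f ->
    exists Z : set X, lindelof Z /\ f @` Z = f @` [set: X].

Definition embedding (X K : topologicalType) (e : X -> K) : Prop :=
  continuous e /\ injective e /\
  forall U : set X, open U ->
    exists V : set K, open V /\ e @` U = range e `&` V.

Definition is_stone_cech (X K : topologicalType) (e : X -> K) : Prop :=
  compact [set: K] /\ hausdorff_space K /\ embedding e /\ dense (range e) /\
  forall (Y : topologicalType) (g : X -> Y),
    compact [set: Y] -> hausdorff_space Y -> continuous g ->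
    exists h : K -> Y, continuous h /\ (forall x, h (e x) = g x).

(* Main.v *)
Require Import Defs.
From HB Require Import structures.
From mathcomp Require Import all_boot all_order all_algebra.
From mathcomp Require Import all_classical all_reals all_analysis.
From mathcomp Require Import Rstruct Rstruct_topology.
From mathcomp Require Import finmap.
From mathcomp Require Import ring lra.
Import Order.TTheory GRing.Theory Num.Theory.
Local Open Scope classical_set_scope.
Notation RR := Rdefinitions.R.
Definition ptK (K : topologicalType) (k0 : K) : Type := K.
HB.instance Definition _ (K : topologicalType) (k0 : K) := Topological.copy (@ptK K k0) K.
HB.instance Definition _ (K : topologicalType) (k0 : K) := isPointed.Build (@ptK K k0) k0.

Lemma compact_fin_cover (K : topologicalType) (A : set K) (I : Type) (V : I -> set K) :
  compact A -> (forall i, open (V i)) -> A `<=` \bigcup_(i in [set: I]) V i ->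
  exists J : set I, finite_set J /\ A `<=` \bigcup_(i in J) V i.
Proof.
move=> cA oV cov.
have [[k0 Ak0]|nA] := pselect (exists k, A k); last first.
  by exists set0; split => // k Ak; exfalso; apply: nA; exists k.
have : @compact (@ptK K k0) A by [].
rewrite compact_cover => /(_ {classic I} [set: {classic I}] V) [].
- by move=> i _; exact: oV.
- exact: cov.
move=> J _ HJ. pose J' : set I := fun i => (i : {classic I}) \in J.
exists J'; split.
  have : finite_set ([set` J] : set {classic I}) by exact: finite_fset.
  by [].
move=> k /HJ [i Ji Vi]; by exists i.
Qed.
Local Open Scope ring_scope.
Lemma real_cover (S : set RR) (N : RR -> set RR) :
  (forall s, S s -> nbhs s (N s)) ->
  exists T : set RR, countable T /\ T `<=` S /\ S `<=` \bigcup_(t in T) N t.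
Proof.
move=> HN.
pose good (s : RR) (p : int * nat) :=
  (forall y : RR, `|y * p.2.+1%:R - p.1%:~R| < 1 -> N s y) /\
  `|s * p.2.+1%:R - p.1%:~R| < 1.
have hg : forall s, exists p, S s -> good s p.
  move=> s; have [Ss|nSs] := pselect (S s); last by exists (0%Z, 0%N).
  have /nbhs_ballP [eps /= eps0 hb] := HN s Ss.
  pose n := Num.truncn (2 / eps); pose m : RR := n.+1%:R.
  have m0 : 0 < m by rewrite ltr0n.
  have hm : 2 / eps < m by apply: real_truncnS_gt; exact: num_real.
  have hm' : 2 < m * eps by rewrite -ltr_pdivrMr.
  exists (Num.floor (s * m), n) => _; split => /=.
    move=> y hy; apply: hb; rewrite /ball /=.
    have h1 : `|s - y| * m < 2.
      have -> : `|s - y| * m = `|(s * m - (Num.floor (s * m))%:~R) - (y * m - (Num.floor (s * m))%:~R)|.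
        rewrite -[X in _ * X]ger0_norm ?ltW // -normrM; congr `|_|; ring.
      apply: (le_lt_trans (ler_normB _ _)).
      have h2 : `|s * m - (Num.floor (s * m))%:~R| < 1.
        have := Num.Theory.floor_le (s * m); have := Num.Theory.floorD1_gt (s * m).
        rewrite intrD => ha hb'; rewrite ger0_norm; lra.
      lra.
    rewrite -(ltr_pM2r m0); lra.
  have := Num.Theory.floor_le (s * m); have := Num.Theory.floorD1_gt (s * m).
  rewrite intrD => ha hb'; rewrite ger0_norm; lra.
have [P hP] := choice hg.
have ht : forall p, exists t, (exists s, S s /\ P s = p) -> S t /\ P t = p.
  move=> p; have [[s [Ss Ps]]|nex] := pselect (exists s, S s /\ P s = p).
    by exists s.
  by exists 0 => /nex.
have [tf htf] := choice ht.
exists (tf @` (P @` S)); split; [|split].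
- apply: (sub_countable (card_image_le _ _)); exact: countableP.
- by move=> _ [_ [s Ss <-] <-]; have [] := htf (P s) (ex_intro _ s (conj Ss erefl)).
- move=> s Ss; have [St Pt] := htf (P s) (ex_intro _ s (conj Ss erefl)).
  exists (tf (P s)); first by exists (P s) => //; exists s.
  have [g1 _] := hP _ St; have [_ g2] := hP _ Ss.
  by apply: g1; rewrite Pt.
Qed.
Local Close Scope ring_scope.

Notation Y := (one_point_compactification RR).

Lemma Y_hausdorff : hausdorff_space Y.
Proof. exact: one_point_compactification_hausdorff (@locally_compactR RR) (@Rhausdorff RR). Qed.

Lemma perfect_lindelof (X K : topologicalType) (e : X -> K) (h : K -> Y)
  (f : X -> RR) (S : set RR) :
  compact [set: K] -> embedding e -> continuous h -> (forall x, h (e x) = Some (f x)) ->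
  (forall k s, S s -> h k = Some s -> range e k) ->
  lindelof [set x | S (f x)].
Proof.
move=> cK [ce [ie oe]] ch hef hS I U oU cov.
have hV : forall i, exists V, open V /\ e @` U i = range e `&` V.
  by move=> i; exact: oe (oU i).
have [V hV'] := choice hV.
have hY := Y_hausdorff.
have hJ : forall s, exists J : set I, S s -> finite_set J /\
    (h @^-1` [set Some s]) `<=` \bigcup_(i in J) V i.
  move=> s; have [Ss|nSs] := pselect (S s); last by exists set0.
  have cF : compact (h @^-1` [set Some s]).
    apply: (subclosed_compact _ cK) => //.
    apply: preimage_closed; first by move=> k _; exact: ch.
    exact: accessible_closed_set1 (hausdorff_accessible hY) _.
  suff cov' : (h @^-1` [set Some s]) `<=` \bigcup_(i in [set: I]) V i.
    have [J [fJ cJ]] := @compact_fin_cover K _ I V cF (fun i => (hV' i).1) cov'.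
    by exists J.
  move=> k hk; have [x _ ekx] := hS k s Ss hk.
  have fx : f x = s by have := hef x; rewrite ekx hk => -[].
  have [i _ Ui] : (\bigcup_(i in [set: I]) U i) x by apply: cov; rewrite /= fx.
  exists i => //; have : (e @` U i) k by exists x.
  by rewrite (hV' i).2 => -[].
have [J hJ'] := choice hJ.
pose W s := \bigcup_(i in J s) V i.
pose N s := Some @^-1` (~` (h @` (~` W s))).
have hN : forall s, S s -> nbhs s (N s).
  move=> s Ss; apply: open_nbhs_nbhs; split.
    rewrite /N; apply: (@open_comp RR Y Some).
      move=> x _; exact: one_point_compactification_some_continuous.
    apply: closed_openC; apply: compact_closed hY _.
    apply: continuous_compact; first exact: continuous_subspaceT.
    apply: (subclosed_compact _ cK) => //.
    apply: open_closedC; apply: bigcup_open => i _; exact: (hV' i).1.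
  move=> /= [k nWk hk]; apply: nWk; have [_ sub] := hJ' s Ss; exact: sub.
have [T [cT [TS ST]]] := @real_cover S N hN.
exists (\bigcup_(t in T) J t); split.
  apply: bigcup_countable => // t Tt; apply: finite_set_countable.
  exact: (hJ' t (TS _ Tt)).1.
move=> x Sx; have [t Tt Nt] := ST _ Sx.
have : W t (e x).
  apply: contrapT => nW; apply: Nt; exists (e x) => //; exact: hef.
move=> [i Ji Vi]; exists i; first by exists t.
have : (range e `&` V i) (e x) by split => //; exists x.
by rewrite -(hV' i).2 => -[u Uu /ie <-].
Qed.

Lemma lindelofU (X : topologicalType) (A B : set X) :
  lindelof A -> lindelof B -> lindelof (A `|` B).
Proof.
move=> LA LB I U oU cov.
have [J1 [c1 s1]] := LA I U oU (fun x Ax => cov x (or_introl Ax)).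
have [J2 [c2 s2]] := LB I U oU (fun x Bx => cov x (or_intror Bx)).
exists (\bigcup_(b in [set: bool]) (if b then J1 else J2)); split.
  by apply: bigcup_countable; [exact: countableP | case].
move=> x [/s1|/s2] [i Ji Ui]; exists i => //.
  by exists true.
by exists false.
Qed.

Lemma lindelof_countable (X : topologicalType) (A : set X) :
  countable A -> lindelof A.
Proof.
move=> cA I U oU cov.
have hJ : forall x, exists J : set I, countable J /\ (A x -> exists2 i, J i & U i x).
  move=> x; have [Ax|nAx] := pselect (A x); last by exists set0; split.
  have [i _ Ui] := cov x Ax; exists [set i]; split; first exact: countable1.
  by move=> _; exists i.
have [J hJ'] := choice hJ.
exists (\bigcup_(x in A) J x); split.
  by apply: bigcup_countable => // x _; exact: (hJ' x).1.
move=> x Ax; have [i Ji Ui] := (hJ' x).2 Ax; exists i => //; by exists x.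
Qed.

Lemma lindelof0 (X : topologicalType) : lindelof (@set0 X).
Proof. by move=> I U _ _; exists set0; split. Qed.

Lemma extend_Y (X K : topologicalType) (e : X -> K) (f : X -> RR) :
  is_stone_cech e -> continuous f ->
  exists h : K -> Y, continuous h /\ forall x, h (e x) = Some (f x).
Proof.
move=> [_ [_ [_ [_ ext]]]] cf.
have [h [ch hh]] := ext Y (Some \o f) one_point_compactification_compact Y_hausdorff
  (fun x => continuous_comp (cf x) (one_point_compactification_some_continuous _)).
by exists h.
Qed.

Theorem theorem2p6 (X : topologicalType) (hX : tychonoff_space X) :
  (forall (K : topologicalType) (e : X -> K), is_stone_cech e ->
     (exists p : K, ~` range e = [set p]) ->
     EC X Rdefinitions.R) /\
  (forall (K : topologicalType) (e : X -> K), is_stone_cech e ->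
     countable (~` range e) -> locally_compact [set: X] ->
     Lprop X Rdefinitions.R).
Proof.
split.
- move=> K e sc [p hp] nL f cf.
  have [h [ch hh]] := @extend_Y X K e f sc cf.
  have [cK [_ [emb _]]] := sc.
  pose S := [set r : RR | h p <> Some r].
  have hS : forall k s, S s -> h k = Some s -> range e k.
    move=> k s Ss hk; apply: contrapT => nk.
    have : (~` range e) k by [].
    by rewrite hp => kp; apply: Ss; rewrite -kp.
  have LZ := @perfect_lindelof X K e h f S cK emb ch hh hS.
  exists [set x | S (f x)]; split => //.
  have [[x0 nx0]|nex] := pselect (exists x, ~ S (f x)).
    exists (f x0); apply/seteqP; split.
      move=> _ [x nSx <-] /=.
      have e1 : h p = Some (f x) by apply: contrapT.
      have e2 : h p = Some (f x0) by apply: contrapT.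
      by move: e1; rewrite e2 => -[].
    by move=> _ ->; exists x0.
  exfalso; apply: nL.
  have -> : [set: X] = [set x | S (f x)].
    apply/seteqP; split => x // _; apply: contrapT => nSx; apply: nex; by exists x.
  exact: LZ.
- move=> K e sc cR _ nL f cf.
  have [h [ch hh]] := @extend_Y X K e f sc cf.
  have [cK [_ [emb _]]] := sc.
  have [x0 _] : exists x : X, True.
    apply: contrapT => nx; apply: nL.
    have -> : [set: X] = set0.
      by apply/seteqP; split => x // _; apply: nx; exists x.
    exact: lindelof0.
  pose D := h @` (~` range e).
  pose S := [set r : RR | ~ D (Some r)].
  have hS : forall k s, S s -> h k = Some s -> range e k.
    move=> k s Ss hk; apply: contrapT => nk; apply: Ss; by exists k.
  have LZ1 := @perfect_lindelof X K e h f S cK emb ch hh hS.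
  have hg : forall d, exists x, (exists x', Some (f x') = d) -> Some (f x) = d.
    move=> d; have [[x' hx']|nex] := pselect (exists x', Some (f x') = d).
      by exists x'.
    by exists x0.
  have [g hg'] := choice hg.
  have cD : countable D.
    exact: (sub_countable (card_image_le _ _)).
  exists ([set x | S (f x)] `|` g @` D); split.
    apply: lindelofU => //; apply: lindelof_countable.
    exact: (sub_countable (card_image_le _ _)).
  apply/seteqP; split; first by move=> _ [x _ <-]; exists x.
  move=> _ [x _ <-].
  have [Sx|nSx] := pselect (S (f x)); first by exists x => //; left.
  have Dx : D (Some (f x)) by apply: contrapT.
  have := hg' (Some (f x)) (ex_intro _ x erefl) => -[fg].
  by exists (g (Some (f x))) => //; right; exists (Some (f x)).
Qed.
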